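(* The map $\Phi$ has the following properties: (P1) $\Phi$ is linear; (P2) $\Phi(X^\top)=\Phi(X)^\top$ for all $X$; (P3) for every skew-symmetric $X$, $\Phi(X)=P_qXP_q^\top$; (P4) if $X$ is positive semidefinite then so is $\Phi(X)$; (P5) if all entries of $X$ are nonnegative then all entries of $\Phi(X)$ are nonnegative; (P6) $\Phi(J)=J$; (P7) if moreover $P=P^\top$, then $\mathrm{Tr}\,\Phi(X)\le\mathrm{Tr}\,X$ for every positive semidefinite $X$.
   Context: $P=(p_{ij})$ is a row-stochastic $N\times N$ matrix, $q\in[0,1]$, $P_q=(1-q)I+qP$, $J=\mathbf 1\mathbf 1^\top/N$ with $\mathbf 1$ the all-ones vector. $\beta_1,\dots,\beta_N$ are independent random variables in $\{1,\dots,N\}$ with $\mathbb P(\beta_i=j)=p_{ij}$, $e_i$ the standard basis vectors, $K=(1-q)I+q\sum_i e_ie_{\beta_i}^\top$, and $\Phi(X)=\mathbb E[KXK^\top]$ for $X\in\mathbb R^{N\times N}$. *)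

(* Defs.v *)
From HB Require Import structures.
From mathcomp Require Import all_boot all_order all_algebra.
Set Implicit Arguments. Unset Strict Implicit. Unset Printing Implicit Defensive.
Import Order.TTheory GRing.Theory Num.Theory.
Local Open Scope ring_scope.

Section Defs.
Variables (R : realFieldType) (N : nat).

Definition row_stochastic (P : 'M[R]_N) : Prop :=
  (forall i j, 0 <= P i j) /\ (forall i, \sum_j P i j = 1).

Definition Pq (q : R) (P : 'M[R]_N) : 'M[R]_N := (1 - q)%:M + q *: P.

Definition Jmx : 'M[R]_N := (N%:R)^-1 *: const_mx 1.

(* A realisation b of (beta_1,...,beta_N); K = (1-q) I + q sum_i e_i e_{b i}^T *)
Definition Kmx (q : R) (b : {ffun 'I_N -> 'I_N}) : 'M[R]_N :=
  (1 - q)%:M + q *: \sum_i delta_mx i (b i).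

(* Probability of the realisation b when the beta_i are independent with
   P(beta_i = j) = p_ij (product distribution). *)
Definition beta_prob (P : 'M[R]_N) (b : {ffun 'I_N -> 'I_N}) : R :=
  \prod_i P i (b i).

Definition Phi (P : 'M[R]_N) (q : R) (X : 'M[R]_N) : 'M[R]_N :=
  \sum_(b : {ffun 'I_N -> 'I_N}) beta_prob P b *: (Kmx q b *m X *m (Kmx q b)^T).

Definition skew_symmetric (X : 'M[R]_N) : Prop := X^T = - X.

Definition psd (X : 'M[R]_N) : Prop :=
  X^T = X /\ forall v : 'rV[R]_N, 0 <= (v *m X *m v^T) 0 0.

Definition entrywise_nonneg (X : 'M[R]_N) : Prop := forall i j, 0 <= X i j.

End Defs.

(* Main.v *)
Require Import Defs.
From HB Require Import structures.
From mathcomp Require Import all_boot all_order all_algebra.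
From mathcomp Require Import ring lra.
Import Order.TTheory GRing.Theory Num.Theory.
Local Open Scope ring_scope.

Section Helpers.
Variables (R : realFieldType) (N : nat) (P : 'M[R]_N) (q : R).

Definition cc (i m k : 'I_N) : R := (1 - q) * (i == k)%:R + q * (m == k)%:R.

Lemma sum_delta_l (f : 'I_N -> R) i : \sum_k (i == k)%:R * f k = f i.
Proof.
rewrite (bigD1 i) //= eqxx mul1r big1 ?addr0 // => k; rewrite eq_sym => /negbTE ->.
by rewrite mul0r.
Qed.

Lemma Kentry b i k : Kmx q b i k = cc i (b i) k.
Proof.
rewrite /Kmx /cc !mxE summxE mulr_natr; congr (_ + _).
rewrite (bigD1 i) //= mxE eqxx /= big1 ?addr0; last first.
  by move=> i' ne; rewrite mxE eq_sym (negbTE ne).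
by rewrite eq_sym.
Qed.

Lemma AXBt p (A B : 'M[R]_(p, N)) (X : 'M[R]_N) i j :
  (A *m X *m B^T) i j = \sum_k \sum_l A i k * X k l * B j l.
Proof.
rewrite !mxE exchange_big /=; apply: eq_bigr => l _.
rewrite !mxE mulr_suml; apply: eq_bigr => k _; by rewrite ?mxE.
Qed.

Lemma Phi_entry X i j :
  Phi P q X i j = \sum_b beta_prob P b * (Kmx q b *m X *m (Kmx q b)^T) i j.
Proof. by rewrite /Phi summxE; apply: eq_bigr => b _; rewrite mxE. Qed.

Lemma quad (X : 'M[R]_N) a b i m :
  \sum_k \sum_l (a * (i == k)%:R + b * (m == k)%:R) * X k l * (a * (i == l)%:R + b * (m == l)%:R)
  = a * a * X i i + a * b * X i m + b * a * X m i + b * b * X m m.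
Proof.
transitivity (\sum_k (a * (i == k)%:R + b * (m == k)%:R) * (a * X k i + b * X k m)).
  apply: eq_bigr => k _.
  transitivity (\sum_l ((i == l)%:R * ((a * (i == k)%:R + b * (m == k)%:R) * a * X k l)
        + (m == l)%:R * ((a * (i == k)%:R + b * (m == k)%:R) * b * X k l))).
    by apply: eq_bigr => l _; ring.
  by rewrite big_split /= !sum_delta_l; ring.
transitivity (\sum_k ((i == k)%:R * (a * (a * X k i + b * X k m))
    + (m == k)%:R * (b * (a * X k i + b * X k m)))).
  by apply: eq_bigr => k _; ring.
by rewrite big_split /= !sum_delta_l; ring.
Qed.

Lemma skew_quad (X : 'M[R]_N) (u : 'I_N -> R) :
  (forall k l, X l k = - X k l) -> \sum_k \sum_l u k * X k l * u l = 0.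
Proof.
move=> HX; set S := (X in X = 0).
have : S = - S.
  rewrite /S {1}exchange_big /= -sumrN; apply: eq_bigr => k _.
  rewrite -sumrN; apply: eq_bigr => l _; rewrite HX; ring.
move=> H; lra.
Qed.

Hypothesis rows : forall i, \sum_j P i j = 1.

Lemma E0 : \sum_b beta_prob P b = 1.
Proof.
transitivity (\prod_(i : 'I_N) \sum_(j : 'I_N) P i j); first by rewrite bigA_distr_bigA.
by rewrite big1.
Qed.

Lemma E1 (g : 'I_N -> R) i :
  \sum_b beta_prob P b * g (b i) = \sum_k P i k * g k.
Proof.
pose w := fun (i' m : 'I_N) => if i' == i then g m else 1.
transitivity (\sum_(b : {ffun 'I_N -> 'I_N}) \prod_i' (P i' (b i') * w i' (b i'))).
  apply: eq_bigr => b _; rewrite big_split /=; congr (_ * _).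
  rewrite (bigD1 i) //= /w eqxx big1 ?mulr1 // => i' /negbTE ->; done.
transitivity (\prod_(i' : 'I_N) \sum_(k : 'I_N) (P i' k * w i' k)); first by rewrite bigA_distr_bigA.
rewrite (bigD1 i) //= [X in _ * X]big1 ?mulr1.
  by apply: eq_bigr => k _; rewrite /w eqxx.
move=> i' /negbTE ne; rewrite -(rows i'); apply: eq_bigr => k _.
by rewrite /w ne mulr1.
Qed.

Lemma E2 (g1 g2 : 'I_N -> R) i j : i != j ->
  \sum_b beta_prob P b * (g1 (b i) * g2 (b j)) =
  (\sum_k P i k * g1 k) * (\sum_k P j k * g2 k).
Proof.
move=> nij.
have nji : (j == i) = false by rewrite eq_sym (negbTE nij).
pose w := fun (i' m : 'I_N) => if i' == i then g1 m else if i' == j then g2 m else 1.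
transitivity (\sum_(b : {ffun 'I_N -> 'I_N}) \prod_i' (P i' (b i') * w i' (b i'))).
  apply: eq_bigr => b _; rewrite big_split /=; congr (_ * _).
  rewrite (bigD1 i) //= (bigD1 j) /= ?nji //.
  rewrite /w eqxx nji eqxx [X in _ * (_ * X)]big1 ?mulr1 //.
  by move=> i' /andP[/negbTE -> /negbTE ->].
transitivity (\prod_(i' : 'I_N) \sum_(k : 'I_N) (P i' k * w i' k)); first by rewrite bigA_distr_bigA.
rewrite (bigD1 i) //= [X in _ * X](bigD1 j) /= ?nji //.
rewrite [X in _ * (_ * X)]big1 ?mulr1.
  by congr (_ * _); apply: eq_bigr => k _; rewrite /w ?eqxx ?nji.
move=> i' /andP[/negbTE ne1 /negbTE ne2]; rewrite -(rows i'); apply: eq_bigr => k _.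
by rewrite /w ne1 ne2 mulr1.
Qed.


Lemma sum_delta_r (f : 'I_N -> R) k : \sum_m f m * (m == k)%:R = f k.
Proof.
rewrite -[RHS](sum_delta_l f k); apply: eq_bigr => m _; by rewrite mulrC eq_sym.
Qed.

Lemma KXK_entry b (X : 'M[R]_N) i j :
  (Kmx q b *m X *m (Kmx q b)^T) i j = \sum_k \sum_l cc i (b i) k * X k l * cc j (b j) l.
Proof. rewrite AXBt; apply: eq_bigr => k _; apply: eq_bigr => l _; by rewrite !Kentry. Qed.

Lemma Pq_entry i k : Pq q P i k = (1 - q) * (i == k)%:R + q * P i k.
Proof. by rewrite /Pq !mxE mulr_natr. Qed.

Lemma sum_Pcc i k : \sum_m P i m * cc i m k = Pq q P i k.
Proof.
rewrite Pq_entry.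
transitivity (\sum_m ((1 - q) * (i == k)%:R * P i m + (q * P i m) * (m == k)%:R)).
  by apply: eq_bigr => m _; rewrite /cc; ring.
by rewrite big_split /= -mulr_sumr rows mulr1 (sum_delta_r (fun m => q * P i m)).
Qed.

Lemma sum_cc i m : \sum_k cc i m k = 1.
Proof.
transitivity (\sum_k ((i == k)%:R * (1 - q) + (m == k)%:R * q)).
  by apply: eq_bigr => k _; rewrite /cc; ring.
by rewrite big_split /= (sum_delta_l (fun _ => 1 - q)) (sum_delta_l (fun _ => q)); ring.
Qed.


Hypothesis Pnn : forall i j, 0 <= P i j.
Hypothesis q0 : 0 <= q.
Hypothesis q1 : q <= 1.

Lemma cc_ge0 i m k : 0 <= cc i m k.
Proof. rewrite /cc; apply: addr_ge0; apply: mulr_ge0 => //; by rewrite ?subr_ge0. Qed.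

Lemma prob_ge0 b : 0 <= beta_prob P b.
Proof. by apply: prodr_ge0 => i _. Qed.

Lemma P1 (a : R) (X Y : 'M[R]_N) : Phi P q (a *: X + Y) = a *: Phi P q X + Phi P q Y.
Proof.
rewrite /Phi scaler_sumr -big_split /=; apply: eq_bigr => b _.
rewrite mulmxDr mulmxDl -scalemxAr -scalemxAl scalerDr !scalerA.
by rewrite (mulrC a).
Qed.

Lemma P2 (X : 'M[R]_N) : Phi P q X^T = (Phi P q X)^T.
Proof.
apply/matrixP => i j; rewrite [RHS]mxE !Phi_entry; apply: eq_bigr => b _.
have -> : Kmx q b *m X^T *m (Kmx q b)^T = (Kmx q b *m X *m (Kmx q b)^T)^T.
  by rewrite !trmx_mul trmxK mulmxA.
by rewrite mxE.
Qed.

Lemma P3 (X : 'M[R]_N) : skew_symmetric X -> Phi P q X = Pq q P *m X *m (Pq q P)^T.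
Proof.
rewrite /skew_symmetric => HX.
have HX' : forall k l, X l k = - X k l.
  by move=> k l; have := congr1 (fun M : 'M[R]_N => M k l) HX; rewrite !mxE.
apply/matrixP => i j; rewrite Phi_entry AXBt.
under eq_bigr do rewrite KXK_entry.
case: (eqVneq i j) => [<-|nij].
  rewrite [RHS](skew_quad X (fun k => Pq q P i k)) //.
  by rewrite big1 // => b _; rewrite (skew_quad X (fun k => cc i (b i) k)) // mulr0.
rewrite (eq_bigr (fun b => \sum_k \sum_l beta_prob P b * (cc i (b i) k * X k l * cc j (b j) l))); last first.
  by move=> b _; rewrite mulr_sumr; apply: eq_bigr => k _; rewrite mulr_sumr.
rewrite exchange_big; apply: eq_bigr => k _; rewrite exchange_big; apply: eq_bigr => l _ /=.
transitivity (X k l * \sum_b beta_prob P b * (cc i (b i) k * cc j (b j) l)).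
  by rewrite mulr_sumr; apply: eq_bigr => b _; ring.
have E := E2 (fun m => cc i m k) (fun m => cc j m l) i j nij.
rewrite E !sum_Pcc; ring.
Qed.

Lemma quadv (X : 'M[R]_N) (v : 'rV[R]_N) :
  (v *m X *m v^T) 0 0 = \sum_k \sum_l v 0 k * X k l * v 0 l.
Proof. exact: AXBt. Qed.

Lemma P4 (X : 'M[R]_N) : psd X -> psd (Phi P q X).
Proof.
move=> [XT HX]; split; first by rewrite -P2 XT.
move=> v; rewrite /Phi mulmx_sumr mulmx_suml summxE; apply: sumr_ge0 => b _.
rewrite -scalemxAr -scalemxAl mxE; apply: mulr_ge0; first exact: prob_ge0.
have -> : v *m (Kmx q b *m X *m (Kmx q b)^T) *m v^T
    = (v *m Kmx q b) *m X *m (v *m Kmx q b)^T by rewrite trmx_mul !mulmxA.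
exact: HX.
Qed.

Lemma P5 (X : 'M[R]_N) : entrywise_nonneg X -> entrywise_nonneg (Phi P q X).
Proof.
move=> HX i j; rewrite Phi_entry; apply: sumr_ge0 => b _; apply: mulr_ge0; first exact: prob_ge0.
rewrite KXK_entry; apply: sumr_ge0 => k _; apply: sumr_ge0 => l _.
by apply: mulr_ge0; [apply: mulr_ge0|]; rewrite ?cc_ge0.
Qed.

Lemma P6 : Phi P q (Jmx R N) = Jmx R N.
Proof.
apply/matrixP => i j; rewrite Phi_entry.
have KJ : forall b, Kmx q b *m Jmx R N *m (Kmx q b)^T = Jmx R N.
  move=> b; rewrite /Jmx -scalemxAr -scalemxAl; congr (_ *: _).
  have h1 : Kmx q b *m (const_mx 1 : 'M[R]_N) = const_mx 1.
    apply/matrixP => i' j'; rewrite !mxE -[RHS](sum_cc i' (b i')).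
    by apply: eq_bigr => k _; rewrite [const_mx 1 _ _]mxE mulr1 Kentry.
  rewrite h1; apply/matrixP => i' j'; rewrite !mxE -[RHS](sum_cc j' (b j')).
  by apply: eq_bigr => k _; rewrite [const_mx 1 _ _]mxE mul1r mxE Kentry.
under eq_bigr do rewrite KJ.
by rewrite -mulr_suml E0 mul1r.
Qed.

Lemma P7 : P^T = P -> forall X : 'M[R]_N, psd X -> \tr (Phi P q X) <= \tr X.
Proof.
move=> PT X [XT HX].
have Psym : forall i m, P m i = P i m.
  by move=> i m; have := congr1 (fun M : 'M[R]_N => M i m) PT; rewrite !mxE.
have Hv : forall i m, X i m + X m i <= X i i + X m m.
  move=> i m; have := HX (\row_k (1 * (i == k)%:R + (-1) * (m == k)%:R)).
  rewrite quadv.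
  under eq_bigr do under eq_bigr do rewrite !mxE.
  rewrite quad => h; lra.
have step : forall i, Phi P q X i i = \sum_m P i m *
   ((1 - q) * (1 - q) * X i i + (1 - q) * q * X i m + q * (1 - q) * X m i + q * q * X m m).
  move=> i; rewrite Phi_entry; under eq_bigr do rewrite KXK_entry.
  have E := E1 (fun m => \sum_k \sum_l cc i m k * X k l * cc i m l) i.
  rewrite E; apply: eq_bigr => m _; by rewrite /cc quad.
rewrite /mxtrace.
under eq_bigr do rewrite step.
apply: (@le_trans _ _ (\sum_i \sum_m P i m * ((1 - q) * X i i + q * X m m))).
  apply: ler_sum => i _; apply: ler_sum => m _; apply: ler_wpM2l => //.
  have hq : 0 <= q * (1 - q) by apply: mulr_ge0; rewrite ?subr_ge0.
  have := Hv i m; nra.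
have -> : \sum_i \sum_m P i m * ((1 - q) * X i i + q * X m m)
   = \sum_i (1 - q) * X i i * (\sum_m P i m) + \sum_m q * X m m * (\sum_i P i m).
  rewrite [X in _ = _ + X](eq_bigr (fun m => \sum_i P i m * (q * X m m))); last first.
    by move=> m _; rewrite mulr_sumr; apply: eq_bigr => i _; ring.
  rewrite [X in _ = _ + X]exchange_big -big_split /=; apply: eq_bigr => i _.
  rewrite mulr_sumr -big_split /=; apply: eq_bigr => m _; ring.
under eq_bigr do rewrite rows mulr1.
rewrite [X in _ + X <= _](eq_bigr (fun m => q * X m m)); last first.
  move=> m _; rewrite (eq_bigr (fun i => P m i)) ?rows ?mulr1 //.
by rewrite -!mulr_sumr -mulrDl subrK mul1r.
Qed.

Lemma main :
  (forall (a : R) (X Y : 'M[R]_N),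
                  Phi P q (a *: X + Y) = a *: Phi P q X + Phi P q Y) /\
      (forall X : 'M[R]_N, Phi P q X^T = (Phi P q X)^T) /\
      (forall X : 'M[R]_N, skew_symmetric X -> Phi P q X = Pq q P *m X *m (Pq q P)^T) /\
      (forall X : 'M[R]_N, psd X -> psd (Phi P q X)) /\
      (forall X : 'M[R]_N, entrywise_nonneg X -> entrywise_nonneg (Phi P q X)) /\
      Phi P q (Jmx R N) = Jmx R N /\
      (P^T = P -> forall X : 'M[R]_N, psd X -> \tr (Phi P q X) <= \tr X).
Proof.
split; first exact: P1. split; first exact: P2. split; first exact: P3.
split; first exact: P4. split; first exact: P5. split; first exact: P6.
exact: P7.
Qed.

End Helpers.

Theorem proposition1 (R : realFieldType) (N : nat) (P : 'M[R]_N) (q : R) :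
  row_stochastic P -> 0 <= q <= 1 ->
  (* P1 *) (forall (a : R) (X Y : 'M[R]_N),
                  Phi P q (a *: X + Y) = a *: Phi P q X + Phi P q Y) /\
      (* P2 *) (forall X : 'M[R]_N, Phi P q X^T = (Phi P q X)^T) /\
      (* P3 *) (forall X : 'M[R]_N, skew_symmetric X -> Phi P q X = Pq q P *m X *m (Pq q P)^T) /\
      (* P4 *) (forall X : 'M[R]_N, psd X -> psd (Phi P q X)) /\
      (* P5 *) (forall X : 'M[R]_N, entrywise_nonneg X -> entrywise_nonneg (Phi P q X)) /\
      (* P6 *) Phi P q (Jmx R N) = Jmx R N /\
      (* P7 *) (P^T = P -> forall X : 'M[R]_N, psd X -> \tr (Phi P q X) <= \tr X).
Proof.
move=> [Pnn rows] /andP[q0 q1].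
exact: (@main R N P q rows Pnn q0 q1).
Qed.
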